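(* Let $f:\mathbb{N}\to\mathbb{N}$ satisfy $f(n)/n\to0$. Then for every finite coloring of the edges of $K_\mathbb{N}$ there is a set $A\subseteq\mathbb{N}$ with $A\in\mathcal{Z}_f^+$ and a partition of $A$ into infinitely many finite sets such that all edges of $K_\mathbb{N}$ joining vertices in distinct parts have the same color (i.e. a monochromatic complete multipartite subgraph with finite parts whose vertex set is in $\mathcal{Z}_f^+$).
   Context: $\mathbb{N}=\{1,2,\dots\}$, $K_\mathbb{N}$ the complete graph on $\mathbb{N}$. $\mathcal{Z}_f$ is the ideal of sets $A\subseteq\mathbb{N}$ with $|A\cap\{1,\dots,n\}|/f(n)\to0$, and $\mathcal{Z}_f^+=\mathcal{P}(\mathbb{N})\setminus\mathcal{Z}_f$. *)

(* Defs.v *)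
(* Vertices of K_N are the positive naturals. *)
From Stdlib Require Import Reals Lra Lia List.
Open Scope R_scope.

Definition cnt (A : nat -> bool) (n : nat) : nat :=
  length (filter A (seq 1 n)).

Definition subN (A : nat -> bool) : Prop := forall x, A x = true -> (1 <= x)%nat.

(* A ∈ Z_f : A ⊆ N and |A ∩ {1..n}| / f(n) -> 0, written in epsilon form
   (|A ∩ {1..n}| <= eps * f(n) eventually) to avoid division by f(n) = 0. *)
Definition in_Zf (f : nat -> nat) (A : nat -> bool) : Prop :=
  subN A /\
  forall eps : R, eps > 0 -> exists N : nat, forall n : nat, (N <= n)%nat ->
    INR (cnt A n) <= eps * INR (f n).

Definition in_Zf_plus (f : nat -> nat) (A : nat -> bool) : Prop :=
  subN A /\ ~ in_Zf f A.

Definition inf_finite_partition (A : nat -> bool) (P : nat -> list nat) : Prop :=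
  (forall i, P i <> nil) /\
  (forall i j x, i <> j -> In x (P i) -> In x (P j) -> False) /\
  (forall x, A x = true <-> exists i, In x (P i)).

(* Main.v *)
Require Import Defs.
From Stdlib Require Import Reals List.
From mathcomp Require ssreflect ssrfun ssrbool boolp classical_sets filter.

Module UFm.
Import ssreflect ssrfun ssrbool boolp classical_sets filter.

Lemma ultra_exists (small : (nat -> Prop) -> Prop)
  (s0 : small (fun _ => False))
  (sU : forall X Y, small X -> small Y -> small (fun y => X y \/ Y y))
  (sM : forall X Y, (forall y, X y -> Y y) -> small Y -> small X)
  (sT : ~ small (fun _ => True)) :
  exists G : (nat -> Prop) -> Prop,
    (forall X, small X -> ~ G X) /\
    (forall X, G X \/ G (fun y => ~ X y)) /\
    (forall X Y, G X -> G Y -> G (fun y => X y /\ Y y)) /\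
    (forall X Y, (forall y, X y -> Y y) -> G X -> G Y) /\
    ~ G (fun _ => False).
Proof.
pose F0 := fun X : nat -> Prop => small (fun y => ~ X y).
have PF : ProperFilter (F0 : set_system nat).
  constructor.
  - rewrite /F0 => h; apply: sT; apply: sM h => y _ []. 
  - constructor.
    + rewrite /F0; apply: sM s0 => y; by apply.
    + move=> A B hA hB; rewrite /F0; apply: sM (sU _ _ hA hB) => y hy.
      case: (pselect (A y)) => ay; last by left.
      right => by'; by apply: hy; split.
    + move=> A B hAB hA; rewrite /F0; apply: sM hA => y hy ay; apply: hy; exact: hAB.
have [G [GU sFG]] := ultraFilterLemma PF.
have GF : ProperFilter G by exact: ultra_proper.
have G0 : ~ G (fun _ => False) by exact: (@filter_not_empty _ G GF).
have GI : forall X Y, G X -> G Y -> G (fun y => X y /\ Y y).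
  move=> X Y hX hY; exact: (@filterI _ G (@filter_filter _ G GF) X Y hX hY).
have GS : forall X Y, (forall y, X y -> Y y) -> G X -> G Y.
  move=> X Y hXY hX; exact: (@filterS _ G (@filter_filter _ G GF) X Y hXY hX).
exists G; split; [|split; [|split; [exact GI|split; [exact GS|exact G0]]]].
- move=> X sX GX.
  have : G (fun y => ~ X y) by apply: sFG; rewrite /F0; apply: sM sX => y; apply: contrapT.
  move=> GnX; apply: G0; apply: GS (GI _ _ GX GnX) => y [].
  by [].
- move=> X; exact: (in_ultra_setVsetC X GU).
Qed.
End UFm.

From Stdlib Require Import Reals Lra Lia List ClassicalEpsilon Classical Bool.
Local Open Scope nat_scope.
Local Open Scope bool_scope.
Local Open Scope nat_scope.

Definition asb (P : Prop) : bool := if excluded_middle_informative P then true else false.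
Lemma asbP (P : Prop) : asb P = true <-> P.
Proof. unfold asb; destruct (excluded_middle_informative P); split; congruence || tauto. Qed.
Lemma asbT (P : Prop) : asb P = true -> P.
Proof. apply asbP. Qed.
Lemma Tasb (P : Prop) : P -> asb P = true.
Proof. apply asbP. Qed.

Lemma flen_mono (g h : nat -> bool) (l : list nat) :
  (forall y, In y l -> g y = true -> h y = true) ->
  length (filter g l) <= length (filter h l).
Proof.
  induction l as [|a l IH]; simpl; intros H; [lia|].
  assert (IH' := IH (fun y hy => H y (or_intror hy))).
  destruct (g a) eqn:E1; destruct (h a) eqn:E2; simpl; try lia.
  rewrite (H a (or_introl eq_refl) E1) in E2; discriminate.
Qed.

Lemma flen_union (u g h : nat -> bool) (l : list nat) :
  (forall y, u y = true -> g y = true \/ h y = true) ->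
  length (filter u l) <= length (filter g l) + length (filter h l).
Proof.
  induction l as [|a l IH]; simpl; intros H; [lia|].
  specialize (IH H).
  destruct (u a) eqn:E1; destruct (g a) eqn:E2; destruct (h a) eqn:E3; simpl; try lia.
  destruct (H a E1); congruence.
Qed.

Lemma flen_false (l : list nat) : length (filter (fun _ => false) l) = 0.
Proof. induction l; simpl; auto. Qed.

Lemma flen_true (g : nat -> bool) (l : list nat) : (forall y, g y = true) -> length (filter g l) = length l.
Proof. intros H; induction l; simpl; auto. rewrite H; simpl; auto. Qed.

Lemma flen_shift (T : nat -> bool) (m n : nat) :
  length (filter T (seq 1 n)) <=
  min n m + length (filter (fun y => Nat.ltb m y && T y) (seq 1 n)).
Proof.
  induction n as [|n IH]; [simpl; lia|].
  rewrite seq_S, !filter_app, !length_app.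
  replace (1 + n) with (S n) by lia.
  cbn [filter]; destruct (Nat.lt_ge_cases m (S n)) as [H|H];
  [rewrite (proj2 (Nat.ltb_lt m (S n)) H) | rewrite (proj2 (Nat.ltb_ge m (S n)) H)];
  destruct (T (S n)) eqn:E; cbn [filter length andb]; rewrite ?E; cbn [filter length]; lia.
Qed.


Definition cntP (X : nat -> Prop) (n : nat) : nat :=
  length (filter (fun y => asb (X y)) (seq 1 n)).

Definition small (X : nat -> Prop) : Prop :=
  forall q, exists N, forall n, N <= n -> q * cntP X n <= n.

Lemma small0 : small (fun _ => False).
Proof.
  intros q; exists 0; intros n _.
  assert (cntP (fun _ => False) n = 0).
  { unfold cntP. pose proof (flen_mono (fun y => asb False) (fun _ => false) (seq 1 n)).
    rewrite flen_false in H. assert (forall y, In y (seq 1 n) -> asb False = true -> false = true).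
    { intros y _ h; destruct (proj1 (asbP False) h). }
    specialize (H H0); lia. }
  rewrite H; lia.
Qed.

Lemma smallU X Y : small X -> small Y -> small (fun y => X y \/ Y y).
Proof.
  intros hX hY q. destruct (hX (2*q)) as [N1 H1]; destruct (hY (2*q)) as [N2 H2].
  exists (N1 + N2); intros n hn.
  assert (cntP (fun y => X y \/ Y y) n <= cntP X n + cntP Y n).
  { unfold cntP; apply flen_union. intros y h; apply asbT in h.
    destruct h; [left|right]; apply Tasb; auto. }
  specialize (H1 n ltac:(lia)); specialize (H2 n ltac:(lia)). nia.
Qed.

Lemma cntP_mono X Y n : (forall y, X y -> Y y) -> cntP X n <= cntP Y n.
Proof.
  intros h; unfold cntP; apply flen_mono; intros y _ hy; apply Tasb; apply asbT in hy; auto.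
Qed.

Lemma smallM X Y : (forall y, X y -> Y y) -> small Y -> small X.
Proof.
  intros h hY q; destruct (hY q) as [N H]; exists N; intros n hn.
  specialize (H n hn); pose proof (cntP_mono X Y n h); nia.
Qed.

Lemma smallT : ~ small (fun _ => True).
Proof.
  intros h; destruct (h 2) as [N H]; specialize (H (S N) ltac:(lia)).
  unfold cntP in H.
  assert (length (filter (fun y => asb True) (seq 1 (S N))) = S N).
  { rewrite flen_true, length_seq; auto. intros; apply Tasb; auto. }
  lia.
Qed.

Lemma small_le x : small (fun y => y <= x).
Proof.
  intros q; exists (q * x); intros n hn.
  assert (cntP (fun y => y <= x) n <= x).
  { unfold cntP. pose proof (flen_shift (fun y => asb (y <= x)) x n).
    pose proof (flen_mono (fun y => Nat.ltb x y && asb (y <= x)) (fun _ => false) (seq 1 n)).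
    rewrite flen_false in H0.
    assert (forall y, In y (seq 1 n) -> Nat.ltb x y && asb (y <= x) = true -> false = true).
    { intros y _ h. apply andb_prop in h; destruct h as [h1 h2].
      apply Nat.ltb_lt in h1; apply asbT in h2; lia. }
    specialize (H0 H1); lia. }
  nia.
Qed.

Lemma pigeon (G : (nat -> Prop) -> Prop)
  (Gd : forall X, G X \/ G (fun y => ~ X y))
  (GI : forall X Y, G X -> G Y -> G (fun y => X y /\ Y y))
  (GS : forall X Y, (forall y, X y -> Y y) -> G X -> G Y)
  (G0 : ~ G (fun _ => False)) :
  forall k (Y : nat -> nat -> Prop) X, G X -> (forall y, X y -> exists i, i < k /\ Y i y) ->
  exists i, i < k /\ G (Y i).
Proof.
  induction k as [|k IH]; intros Y X hX hc.
  - exfalso; apply G0; apply (GS X); auto. intros y hy; destruct (hc y hy) as [i [hi _]]; lia.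
  - destruct (Gd (Y k)) as [h|h].
    + exists k; split; auto.
    + destruct (IH Y (fun y => X y /\ ~ Y k y)) as [i [hi hi']].
      * apply GI; auto.
      * intros y [hy hn]. destruct (hc y hy) as [i [hi hi']].
        exists i; split; auto. destruct (Nat.eq_dec i k); [subst; contradiction|lia].
      * exists i; split; auto.
Qed.

Lemma fsmall (f : nat -> nat) (hf : Un_cv (fun n => (INR (f n) / INR n)%R) 0%R) :
  forall q, 1 <= q -> exists N, forall n, N <= n -> 2 * q * f n < n.
Proof.
  intros q hq. assert (hd : (0 < INR (2*q))%R) by (apply lt_0_INR; lia).
  destruct (hf (/ INR (2*q))%R (Rinv_0_lt_compat _ hd)) as [N HN].
  exists (S N). intros n hn. specialize (HN n ltac:(lia)). unfold R_dist in HN.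
  rewrite Rminus_0_r in HN.
  assert (hn0 : (0 < INR n)%R) by (apply lt_0_INR; lia).
  rewrite Rabs_right in HN by (apply Rle_ge; unfold Rdiv; apply Rmult_le_pos;
    [apply pos_INR | left; apply Rinv_0_lt_compat; auto]).
  apply INR_lt. rewrite (mult_INR (2*q) (f n)).
  set (a := INR (f n)) in *. set (b := INR n) in *. set (d := INR (2*q)) in *.
  assert (H1 : (d * (a/b) < 1)%R).
  { replace 1%R with (d * / d)%R by (field; lra). apply Rmult_lt_compat_l; auto. }
  assert (H2 : (d * (a/b) * b < 1 * b)%R) by (apply Rmult_lt_compat_r; auto).
  replace (d * a)%R with (d * (a/b) * b)%R by (field; lra). lra.
Qed.

Lemma exn (f : nat -> nat) (hf : forall q, 1 <= q -> exists N, forall n, N <= n -> 2 * q * f n < n)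
  (T : nat -> Prop) (hT : ~ small T) :
  forall m, exists n, f n < length (filter (fun y => Nat.ltb m y && asb (T y)) (seq 1 n)).
Proof.
  intros m. apply NNPP; intro H. apply hT. intros q. destruct q as [|q'].
  - exists 0; intros; lia.
  - destruct (hf (S q') ltac:(lia)) as [N0 HN0]. exists (N0 + 2 * (S q') * m + 1).
    intros n hn. destruct (Nat.le_gt_cases (S q' * cntP T n) n) as [h|h]; auto.
    exfalso; apply H; exists n.
    pose proof (flen_shift (fun y => asb (T y)) m n) as Hs.
    unfold cntP in h. specialize (HN0 n ltac:(lia)).
    set (c' := length (filter (fun y => Nat.ltb m y && asb (T y)) (seq 1 n))) in *.
    set (cc := length (filter (fun y => asb (T y)) (seq 1 n))) in *.
    assert (S q' * cc <= S q' * (m + c')) by (apply Nat.mul_le_mono_l; lia).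
    nia.
Qed.

Definition Tset (B : nat -> Prop) (c : nat -> nat -> nat) (col : nat) (S : list nat) (y : nat) : Prop :=
  B y /\ forall x, In x S -> x < y /\ c x y = col.
Definition gb B c col S m y := Nat.ltb m y && asb (Tset B c col S y).
Definition part B c col S m n := filter (gb B c col S m) (seq 1 n).
Definition nxt (f : nat -> nat) B c col S m :=
  epsilon (inhabits 0) (fun n => f n < length (part B c col S m n)).
Fixpoint st f B c col j : list nat * nat :=
  match j with
  | O => (nil, 0)
  | S j' => let p := st f B c col j' in
      (fst p ++ part B c col (fst p) (snd p) (nxt f B c col (fst p) (snd p)),
       nxt f B c col (fst p) (snd p))
  end.
Definition Pt f B c col j :=
  part B c col (fst (st f B c col j)) (snd (st f B c col j))
    (nxt f B c col (fst (st f B c col j)) (snd (st f B c col j))).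

Lemma part_In B c col S m n y :
  In y (part B c col S m n) <-> (1 <= y <= n /\ m < y /\ Tset B c col S y).
Proof.
  unfold part, gb; rewrite filter_In, in_seq. split.
  - intros [h1 h2]; apply andb_prop in h2; destruct h2 as [h2 h3].
    apply Nat.ltb_lt in h2; apply asbT in h3. split; [lia|auto].
  - intros [h1 [h2 h3]]; split; [lia|]. apply andb_true_intro; split.
    + apply Nat.ltb_lt; auto.
    + apply Tasb; auto.
Qed.

Lemma nxt_spec f B c col
  (Hex : forall S m, (forall x, In x S -> B x) -> exists n, f n < length (part B c col S m n))
  S m : (forall x, In x S -> B x) -> f (nxt f B c col S m) < length (part B c col S m (nxt f B c col S m)).
Proof.
  intros HS. unfold nxt. apply (epsilon_spec (inhabits 0) (fun n => f n < length (part B c col S m n))).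
  apply Hex; auto.
Qed.

Lemma construction f B c col
  (Hex : forall S m, (forall x, In x S -> B x) -> exists n, f n < length (part B c col S m n)) :
  forall j, (forall x, In x (fst (st f B c col j)) -> B x /\ x <= snd (st f B c col j)) /\
    j <= snd (st f B c col j) /\
    (forall i x, i < j -> In x (Pt f B c col i) -> In x (fst (st f B c col j))).
Proof.
  induction j as [|j IH].
  - simpl; split; [intros x []|split; [lia|intros; lia]].
  - destruct IH as [I1 [I2 I3]].
    set (S0 := fst (st f B c col j)) in *. set (m0 := snd (st f B c col j)) in *.
    assert (HB : forall x, In x S0 -> B x) by (intros x h; apply I1; auto).
    pose proof (nxt_spec f B c col Hex S0 m0 HB) as Hsp.
    set (n0 := nxt f B c col S0 m0) in *.
    assert (Hmn : m0 < n0).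
    { destruct (part B c col S0 m0 n0) as [|y l] eqn:E; [simpl in Hsp; lia|].
      assert (In y (part B c col S0 m0 n0)) by (rewrite E; left; auto).
      apply part_In in H; lia. }
    change (st f B c col (S j)) with (S0 ++ part B c col S0 m0 n0, n0). simpl fst; simpl snd.
    split; [|split].
    + intros x hx. apply in_app_or in hx. destruct hx as [hx|hx].
      * destruct (I1 x hx); split; auto; lia.
      * apply part_In in hx. destruct hx as [h1 [h2 [h3 h4]]]; split; auto; lia.
    + lia.
    + intros i x hi hx. apply in_or_app. destruct (Nat.eq_dec i j) as [->|hne].
      * right; exact hx.
      * left; apply (I3 i); auto; lia.
Qed.

Open Scope R_scope.

(* A finite coloring of the edges {x,y} (1 <= x < y) of K_N is c with
   c x y < k for x < y; only the values c x y with x < y are used. *)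
Theorem mainTheorem18 (f : nat -> nat)
  (hf : Un_cv (fun n => INR (f n) / INR n) 0)
  (k : nat) (c : nat -> nat -> nat)
  (hc : forall x y, (1 <= x)%nat -> (x < y)%nat -> (c x y < k)%nat) :
  exists (A : nat -> bool) (P : nat -> list nat) (col : nat),
    in_Zf_plus f A /\ inf_finite_partition A P /\
    forall i j x y, i <> j -> In x (P i) -> In y (P j) -> (x < y)%nat ->
      c x y = col.
Proof.
  destruct (UFm.ultra_exists small small0 smallU smallM smallT) as [G [Gs [Gd [GI [GS G0]]]]].
  assert (Gns : forall X, G X -> ~ small X) by (intros X h hs; exact (Gs X hs h)).
  pose proof (fsmall f hf) as hf'.
  assert (Gcof : forall x, G (fun y => (x < y)%nat)).
  { intros x. destruct (Gd (fun y => (x < y)%nat)) as [h|h]; auto.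
    exfalso. apply (Gs _ (small_le x)). apply (GS _ _ (fun y hy => proj1 (Nat.nlt_ge x y) hy) h). }
  set (colorOf := fun x => epsilon (inhabits 0%nat)
                     (fun i => (i < k)%nat /\ G (fun y => (x < y)%nat /\ c x y = i))).
  assert (Hcol : forall x, (1 <= x)%nat -> (colorOf x < k)%nat /\
                   G (fun y => (x < y)%nat /\ c x y = colorOf x)).
  { intros x hx. unfold colorOf.
    apply (epsilon_spec (inhabits 0%nat)
             (fun i => (i < k)%nat /\ G (fun y => (x < y)%nat /\ c x y = i))).
    apply (pigeon G Gd GI GS G0 k (fun i y => (x < y)%nat /\ c x y = i) (fun y => (x < y)%nat)); auto.
    intros y hy; exists (c x y); auto. }
  destruct (pigeon G Gd GI GS G0 k (fun i x => (1 <= x)%nat /\ colorOf x = i)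
              (fun x => (0 < x)%nat) (Gcof 0%nat)) as [col [hcolk hB]].
  { intros y hy; exists (colorOf y); split; [apply Hcol; lia | split; auto; lia]. }
  set (B := fun x => (1 <= x)%nat /\ colorOf x = col).
  assert (TG : forall S, (forall x, In x S -> B x) -> G (Tset B c col S)).
  { induction S as [|a S IH]; intros HS.
    - apply (GS B); auto. intros y hy; split; auto; intros x [].
    - apply (GS (fun y => Tset B c col S y /\ ((a < y)%nat /\ c a y = col))).
      + intros y [[h1 h2] h3]; split; auto. intros x [<-|hx]; auto.
      + apply GI; [apply IH; intros; apply HS; right; auto|].
        destruct (HS a (or_introl eq_refl)) as [ha1 ha2].
        pose proof (proj2 (Hcol a ha1)) as H. rewrite ha2 in H; exact H. }
  assert (Hex : forall S m, (forall x, In x S -> B x) ->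
            exists n, (f n < length (part B c col S m n))%nat).
  { intros S m HS. unfold part, gb. apply (exn f hf' _ (Gns _ (TG S HS))). }
  pose proof (construction f B c col Hex) as Hcons.
  assert (HPin : forall j y, In y (Pt f B c col j) ->
     (1 <= y)%nat /\ (snd (st f B c col j) < y)%nat /\ Tset B c col (fst (st f B c col j)) y).
  { intros j y hy. unfold Pt in hy. apply part_In in hy. destruct hy as [h1 [h2 h3]]; split; [lia|auto]. }
  assert (HPsp : forall j, (f (snd (st f B c col (S j))) < length (Pt f B c col j))%nat).
  { intros j. apply nxt_spec; auto. intros x hx; apply (proj1 (Hcons j) x hx). }
  set (P := Pt f B c col).
  exists (fun x => asb (exists j, In x (P j))), P, col.
  split; [|split; [split; [|split]|]].
  - split.
    + intros x hx. apply asbT in hx. destruct hx as [j hj]. apply HPin in hj; lia.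
    + intros [_ H]. destruct (H (1/2)%R ltac:(lra)) as [N HN].
      set (n := snd (st f B c col (S N))).
      assert (hNn : (N <= n)%nat) by (pose proof (proj1 (proj2 (Hcons (S N)))); unfold n; lia).
      specialize (HN n hNn).
      assert (hle : (length (P N) <= cnt (fun x => asb (exists j, In x (P j))) n)%nat).
      { unfold cnt, P, Pt. apply flen_mono. intros y hy hg. apply Tasb. exists N.
        unfold P, Pt, part. apply filter_In; auto. }
      pose proof (HPsp N) as hsp. fold n in hsp. fold P in hsp.
      assert (h1 : (INR (f n) + 1 <= INR (cnt (fun x => asb (exists j, In x (P j))) n))%R).
      { rewrite <- S_INR. apply le_INR. lia. }
      pose proof (pos_INR (f n)). lra.
  - intros i hi. pose proof (HPsp i) as hsp. fold P in hsp. rewrite hi in hsp. simpl in hsp. lia.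
  - intros i j x hij hi hj. destruct (Nat.lt_gt_cases i j) as [[h|h] _].
    + exact hij.
    + pose proof (proj2 (proj2 (Hcons j)) i x h hi) as hx.
      pose proof (proj2 (proj1 (Hcons j) x hx)). apply HPin in hj. lia.
    + pose proof (proj2 (proj2 (Hcons i)) j x h hj) as hx.
      pose proof (proj2 (proj1 (Hcons i) x hx)). apply HPin in hi. lia.
  - intros x; split; intro h; [apply asbT in h | apply Tasb]; auto.
  - intros i j x y hij hx hy hxy. destruct (Nat.lt_gt_cases i j) as [[h|h] _].
    + exact hij.
    + pose proof (proj2 (proj2 (Hcons j)) i x h hx) as hxin.
      apply HPin in hy. destruct hy as [_ [_ [_ hT]]]. apply (hT x hxin).
    + pose proof (proj2 (proj2 (Hcons i)) j y h hy) as hyin.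
      pose proof (proj2 (proj1 (Hcons i) y hyin)). apply HPin in hx. lia.
Qed.
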